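(* Let $A$ be a real $m\times n$ matrix with $r:=\operatorname{rank}(A)<n$, $k:=n-r$, $\beta\in\mathbb R_m$, $y\in\mathbb R_n$ with $Ay^T=\beta^T$, and $F\in S(A,\beta)$. Let $(x_1^T,\dots,x_k^T)$ be a basis of $\ker(A)$, $X$ the $k\times n$ matrix with rows $x_1,\dots,x_k$, $\pi_s(u):=u^{x_s}$ for $u\in\mathbb R_n^+$, $\psi(w):=\exp(X^\dagger\log(w)^T)$ and $G(w):=F(\psi(w))/\psi(w)^y$ for $w\in\mathbb R_k^+$. Then $F(v)=G(\pi_1(v),\dots,\pi_k(v))v^y$ for all $v\in\mathbb R_n^+$, and $G$ is the unique function $H:\mathbb R_k^+\to\mathbb R$ such that $F(v)=H(\pi_1(v),\dots,\pi_k(v))v^y$ for every $v\in\mathbb R_n^+$.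
   Context: $\mathbb R_m$ denotes real row vectors of length $m$, $\mathbb R_m^+$ those with all entries strictly positive (similarly for $n,k$). For $c\in\mathbb R_m^+$, $\alpha\in\mathbb R_m$, $c^\alpha:=\prod_i c_i^{\alpha_i}$. For positive row vector $w$, $\log(w)$ is taken entrywise (as a row vector); for a column vector $z$, $\exp(z)$ is the row vector of entrywise exponentials. $B^\dagger$ is the Moore–Penrose pseudoinverse. For a real $m\times n$ matrix $A$ with columns $\alpha_1^T,\dots,\alpha_n^T$ and $\beta\in\mathbb R_m$, $S(A,\beta)$ is the set of all $F:\mathbb R_n^+\to\mathbb R$ with $F(v_1c^{\alpha_1},\dots,v_nc^{\alpha_n})=F(v_1,\dots,v_n)c^\beta$ for all $v_1,\dots,v_n>0$ and all $c\in\mathbb R_m^+$. *)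

(* Defs.v *)
From Stdlib Require Import Reals.
From mathcomp Require Import ssreflect ssrfun ssrbool eqtype ssrnat seq fintype bigop.

Set Implicit Arguments.
Unset Strict Implicit.
Unset Printing Implicit Defensive.

Local Open Scope R_scope.

(* vectors in R_n are functions 'I_n -> R ; m x n matrices are 'I_m -> 'I_n -> R *)
Definition rsum (n : nat) (f : 'I_n -> R) : R := \big[Rplus/R0]_(i < n) f i.
Definition rprod (n : nat) (f : 'I_n -> R) : R := \big[Rmult/R1]_(i < n) f i.

Definition posvec (n : nat) (v : 'I_n -> R) : Prop := forall i, 0 < v i.

Definition vpow (n : nat) (c alpha : 'I_n -> R) : R :=
  rprod (fun i => Rpower (c i) (alpha i)).

Definition inS (m n : nat) (A : 'I_m -> 'I_n -> R) (beta : 'I_m -> R)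
  (F : ('I_n -> R) -> R) : Prop :=
  forall v : 'I_n -> R, posvec v ->
  forall c : 'I_m -> R, posvec c ->
    F (fun j => v j * vpow c (fun i => A i j)) = F v * vpow c beta.

Definition lin_indep (p q : nat) (vs : 'I_p -> 'I_q -> R) : Prop :=
  forall c : 'I_p -> R, (forall j, rsum (fun s => c s * vs s j) = 0) ->
  forall s, c s = 0.

Definition is_rank (m n : nat) (A : 'I_m -> 'I_n -> R) (r : nat) : Prop :=
  (exists f : 'I_r -> 'I_n, lin_indep (fun s i => A i (f s))) /\
  (forall f : 'I_r.+1 -> 'I_n, ~ lin_indep (fun s i => A i (f s))).

Definition in_ker (m n : nat) (A : 'I_m -> 'I_n -> R) (z : 'I_n -> R) : Prop :=
  forall i, rsum (fun j => A i j * z j) = 0.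

Definition is_ker_basis (m n k : nat) (A : 'I_m -> 'I_n -> R)
  (x : 'I_k -> 'I_n -> R) : Prop :=
  (forall s, in_ker A (x s)) /\ lin_indep x /\
  (forall z, in_ker A z -> exists c : 'I_k -> R,
       forall j, z j = rsum (fun s => c s * x s j)).

Definition mxmul (a b c : nat) (M : 'I_a -> 'I_b -> R) (N : 'I_b -> 'I_c -> R)
  : 'I_a -> 'I_c -> R := fun i l => rsum (fun j => M i j * N j l).

(* P is the Moore-Penrose pseudoinverse of X (Penrose equations; unique) *)
Definition is_pinv (k n : nat) (X : 'I_k -> 'I_n -> R) (P : 'I_n -> 'I_k -> R)
  : Prop :=
  (forall i j, mxmul X (mxmul P X) i j = X i j) /\
  (forall i j, mxmul P (mxmul X P) i j = P i j) /\
  (forall i j, mxmul X P i j = mxmul X P j i) /\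
  (forall i j, mxmul P X i j = mxmul P X j i).

Definition psi (k n : nat) (P : 'I_n -> 'I_k -> R) (w : 'I_k -> R) : 'I_n -> R :=
  fun j => exp (rsum (fun s => P j s * ln (w s))).

Definition piv (k n : nat) (x : 'I_k -> 'I_n -> R) (u : 'I_n -> R) : 'I_k -> R :=
  fun s => vpow u (x s).

(* Main.v *)
Require Import Defs.
From Stdlib Require Import Reals FunctionalExtensionality.
From mathcomp Require Import all_boot all_algebra.
From mathcomp Require Import Rstruct.
Import GRing.Theory.
Local Open Scope ring_scope.

Section Fld.
Local Open Scope R_scope.
Lemma fld1 (a c E : R) : E <> 0 -> a * c = a / E * (E * c).
Proof. intros; field; auto. Qed.
Lemma fld2 (h f E : R) : E <> 0 -> f = h * E -> h = f / E.
Proof. intros ? ->; field; auto. Qed.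
End Fld.

Lemma RplusE : Rplus = (@GRing.add R). Proof. by []. Qed.
Lemma RmultE : Rmult = (@GRing.mul R). Proof. by []. Qed.
Lemma R0E : R0 = (0 : R). Proof. by []. Qed.
Lemma R1E : R1 = (1 : R). Proof. by []. Qed.
Lemma rsumE n (f : 'I_n -> R) : rsum f = \sum_(i < n) f i. Proof. by []. Qed.
Lemma expD (a b : R) : exp (a + b) = exp a * exp b. Proof. exact: exp_plus. Qed.
Lemma exp0 : exp 0 = 1. Proof. exact: exp_0. Qed.

Lemma vpowE n (u e : 'I_n -> R) : posvec u ->
  vpow u e = exp (\sum_j e j * ln (u j)).
Proof.
move=> hu; rewrite /vpow /rprod RmultE R1E.
rewrite (big_morph exp expD exp0); apply: eq_bigr => i _.
by rewrite /Rpower RmultE.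
Qed.

Lemma swap2 p q (f : 'I_p -> R) (g : 'I_q -> R) (M : 'I_q -> 'I_p -> R) :
  \sum_j f j * (\sum_s g s * M s j) = \sum_s g s * (\sum_j M s j * f j).
Proof.
under eq_bigr do rewrite mulr_sumr.
under [RHS]eq_bigr do rewrite mulr_sumr.
rewrite exchange_big; apply: eq_bigr => s _; apply: eq_bigr => j _.
by rewrite mulrCA (mulrC (f j)).
Qed.

Lemma swap2' p q (f : 'I_p -> R) (g : 'I_q -> R) (M : 'I_p -> 'I_q -> R) :
  \sum_j f j * (\sum_t M j t * g t) = \sum_t (\sum_j f j * M j t) * g t.
Proof.
under eq_bigr do rewrite mulr_sumr.
under [RHS]eq_bigr do rewrite mulr_suml.
rewrite exchange_big; apply: eq_bigr => s _; apply: eq_bigr => j _.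
by rewrite mulrA.
Qed.
Lemma perp_ker (m n : nat) (A : 'I_m -> 'I_n -> R) (z : 'I_n -> R) :
  (forall u, in_ker A u -> rsum (fun j => (z j * u j)) = 0) ->
  exists t : 'I_m -> R, forall j, z j = rsum (fun i => (t i * A i j)).
Proof.
move=> hz.
pose Am := \matrix_(i, j) A i j : 'M[R]_(m, n).
pose K := kermx Am^T.
have hKA : K *m Am^T = 0 by apply: mulmx_ker.
have hK : forall i, in_ker A (fun j => K i j).
  move=> i i'; have := congr1 (fun M : 'M[R]_(n,m) => M i i') hKA.
  rewrite !mxE /rsum => h; rewrite -[X in _ = X]h /=; apply: eq_bigr => j _.
  by rewrite !mxE /= mulrC.
pose zr := \row_j z j : 'rV[R]_n.
have hzK : zr *m K^T = 0.
  apply/matrixP => i0 i; rewrite !mxE -[RHS](hz _ (hK i)).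
  by apply: eq_bigr => j _; rewrite !mxE.
have sub1 : (Am <= kermx K^T)%MS.
  by rewrite sub_kermx -[Am]trmxK -trmx_mul hKA trmx0.
have sub2 : (kermx K^T <= Am)%MS.
  rewrite -(mxrank_leqif_sup sub1).2 mxrank_ker mxrank_tr mxrank_ker mxrank_tr.
  by rewrite subKn ?rank_leq_col.
have sz : (zr <= Am)%MS.
  by apply: submx_trans sub2; rewrite sub_kermx hzK.
exists (fun i => (zr *m pinvmx Am) 0 i) => j.
have := congr1 (fun M : 'rV[R]_n => M 0 j) (mulmxKpV sz).
rewrite !mxE /= => <-.
by apply: eq_bigr => i _; rewrite !mxE.
Qed.

Lemma triple n k (x : 'I_k -> 'I_n -> R) (P : 'I_n -> 'I_k -> R) (a : 'I_n -> R) s :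
  \sum_j x s j * (\sum_t P j t * (\sum_l x t l * a l)) =
  \sum_l (\sum_j x s j * (\sum_t P j t * x t l)) * a l.
Proof.
rewrite swap2' (swap2' _ _ (fun t => \sum_j x s j * P j t)).
by apply: eq_bigr => l _; rewrite swap2'.
Qed.

Lemma lnsum n (u e : 'I_n -> R) : posvec u ->
  ln (vpow u e) = \sum_j e j * ln (u j).
Proof. by move=> hu; rewrite vpowE // ln_exp. Qed.

Local Close Scope ring_scope.
Local Open Scope R_scope.

Theorem mainTheorem5 (m n : nat) (A : 'I_m -> 'I_n -> R) (r k : nat)
  (hr : is_rank A r) (hrn : (r < n)%N) (hk : k = (n - r)%N)
  (beta : 'I_m -> R) (y : 'I_n -> R)
  (hy : forall i, rsum (fun j => A i j * y j) = beta i)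
  (F : ('I_n -> R) -> R) (hF : inS A beta F)
  (x : 'I_k -> 'I_n -> R) (hx : is_ker_basis A x)
  (Xd : 'I_n -> 'I_k -> R) (hXd : is_pinv x Xd) :
  let G := fun w : 'I_k -> R => F (psi Xd w) / vpow (psi Xd w) y in
  (forall v : 'I_n -> R, posvec v -> F v = G (piv x v) * vpow v y) /\
  (forall H : ('I_k -> R) -> R,
     (forall v : 'I_n -> R, posvec v -> F v = H (piv x v) * vpow v y) ->
     forall w : 'I_k -> R, posvec w -> H w = G w).
Proof.
Local Open Scope ring_scope.
move=> G.
have [P1 [P2 [P3 P4]]] := hXd.
have [hxk [hxi hxs]] := hx.
have psipos : forall w, posvec (psi Xd w) by move=> w j; apply: exp_pos.
split.
- move=> v hv.
  pose a j := ln (v j).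
  pose b j := \sum_s Xd j s * (\sum_l x s l * a l).
  pose z j := a j - b j.
  pose w := piv x v.
  have hpsi : psi Xd w = fun j => exp (b j).
    apply: functional_extensionality => j; rewrite /psi rsumE; congr exp.
    by apply: eq_bigr => s _; rewrite /w /piv lnsum.
  have hxz : forall s, \sum_j x s j * z j = 0.
    move=> s; rewrite /z.
    under eq_bigr do rewrite mulrBr.
    rewrite sumrB /b triple; apply/eqP; rewrite subr_eq0; apply/eqP.
    apply: eq_bigr => l _; congr (_ * _).
    by have := P1 s l; rewrite /mxmul !rsumE.
  have [t ht] : exists t : 'I_m -> R, forall j, z j = rsum (fun i => t i * A i j).
    apply: perp_ker => u hu.
    have [c hc] := hxs u hu.
    rewrite rsumE.
    under eq_bigr do rewrite hc rsumE.
    rewrite swap2; apply: big1 => s _.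
    by rewrite hxz mulr0.
  pose c i := exp (t i).
  have cpos : posvec c by move=> i; apply: exp_pos.
  have hvc : (fun j => psi Xd w j * vpow c (fun i => A i j)) = v.
    apply: functional_extensionality => j.
    rewrite hpsi vpowE // -expD.
    have -> : \sum_i A i j * ln (c i) = z j.
      by rewrite ht rsumE; apply: eq_bigr => i _; rewrite /c ln_exp mulrC.
    by rewrite /z ?RplusE addrC subrK /a exp_ln.
  have hFv := hF _ (psipos w) _ cpos; rewrite hvc in hFv.
  have hvy : vpow v y = vpow (psi Xd w) y * vpow c beta.
    rewrite !vpowE // -expD; congr exp.
    rewrite hpsi.
    have -> : \sum_j y j * ln (exp (b j)) = \sum_j y j * b j.
      by apply: eq_bigr => j _; rewrite ln_exp.
    have -> : \sum_i beta i * ln (c i) = \sum_j y j * z j.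
      under [RHS]eq_bigr do rewrite ht rsumE.
      rewrite swap2; apply: eq_bigr => i _.
      by rewrite /c ln_exp -hy rsumE mulrC.
    rewrite -big_split /=; apply: eq_bigr => j _.
    by rewrite ?RplusE ?RmultE -mulrDr /z addrC subrK.
  rewrite /G hFv hvy /w.
  have hE : vpow (psi Xd (piv x v)) y <> 0.
    rewrite vpowE //; apply: Rgt_not_eq; apply: exp_pos.
  move: hE; generalize (vpow (psi Xd (piv x v)) y) => E hE.
  exact (fld1 _ _ _ hE).
- move=> H hH w hw.
  have hXP : forall s t, \sum_j x s j * Xd j t = (t == s)%:R.
    move=> s.
    pose cc t := \sum_j x s j * Xd j t - (t == s)%:R.
    have hc : forall l, rsum (fun t => cc t * x t l) = 0.
      move=> l; rewrite rsumE /cc.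
      under eq_bigr do rewrite mulrBl.
      rewrite sumrB -swap2'.
      have -> : \sum_t (t == s)%:R * x t l = x s l.
        rewrite (bigD1 s) //= eqxx mul1r big1 ?addr0 // => i /negbTE ->.
        by rewrite mul0r.
      by have := P1 s l; rewrite /mxmul !rsumE => ->; rewrite subrr.
    move=> t; have := hxi cc hc t; rewrite /cc => /eqP.
    by rewrite subr_eq0 => /eqP.
  have hpw : piv x (psi Xd w) = w.
    apply: functional_extensionality => s.
    rewrite /piv vpowE //.
    have -> : \sum_j x s j * ln (psi Xd w j) = ln (w s).
      under eq_bigr do rewrite /psi ln_exp rsumE.
      rewrite swap2'.
      under eq_bigr do rewrite hXP.
      rewrite (bigD1 s) //= eqxx mul1r big1 ?addr0 // => i /negbTE ->.
      by rewrite mul0r.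
    by rewrite exp_ln.
  have := hH _ (psipos w); rewrite hpw /G => hh.
  have hE : vpow (psi Xd w) y <> 0.
    rewrite vpowE //; apply: Rgt_not_eq; apply: exp_pos.
  exact (fld2 _ _ _ hE hh).
Qed.
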